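(* Let $M$ be a magma satisfying $(xy)z = xz$ and $x(yz) = xx$ for all $x,y,z\in M$. Then $M$ satisfies $xy = xz$ and $(xy)z = xy$ for all $x,y,z\in M$ if and only if $M$ avoids the magma $D$ on $\{0,1,2,3\}$ with Cayley table \[ \begin{array}{c|cccc} D & 0 & 1 & 2 & 3 \\ \hline 0 & 0 & 2 & 0 & 0 \\ 1 & 3 & 3 & 3 & 3 \\ 2 & 0 & 2 & 0 & 0 \\ 3 & 3 & 3 & 3 & 3 \end{array}. \]
   Context: A magma is a nonempty set with a binary operation, written by juxtaposition. A magma $M$ avoids a magma $F$ if no submagma of $M$ is isomorphic to $F$. In the Cayley table, the entry in row $i$, column $j$ is $i\cdot j$. *)

(* Defs.v *)
From mathcomp Require Import all_boot.
Set Implicit Arguments. Unset Strict Implicit. Unset Printing Implicit Defensive.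

(* The magma D on {0,1,2,3}: entry in row i, column j is i.j *)
Definition D_table : seq (seq nat) :=
  [:: [:: 0; 2; 0; 0];
      [:: 3; 3; 3; 3];
      [:: 0; 2; 0; 0];
      [:: 3; 3; 3; 3]].

Definition D_op (i j : 'I_4) : 'I_4 := inord (nth 0 (nth [::] D_table i) j).

Definition is_submagma (T : Type) (op : T -> T -> T) (S : T -> Prop) : Prop :=
  (exists x, S x) /\ (forall x y, S x -> S y -> S (op x y)).

Definition submagma_iso (T : Type) (op : T -> T -> T) (S : T -> Prop)
    (n : nat) (opF : 'I_n -> 'I_n -> 'I_n) : Prop :=
  exists f : 'I_n -> T,
    [/\ forall i, S (f i),
        injective f,
        (forall x, S x -> exists i, f i = x) &
        (forall i j, f (opF i j) = op (f i) (f j))].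

Definition avoids (T : Type) (op : T -> T -> T) (n : nat)
    (opF : 'I_n -> 'I_n -> 'I_n) : Prop :=
  ~ exists S : T -> Prop, is_submagma op S /\ submagma_iso op S opF.

(* Main.v *)
Require Import Defs.
From Stdlib Require Import Classical.
From mathcomp Require Import all_boot.

Section Aux.
Variables (T : Type) (op : T -> T -> T).
Hypothesis H1 : forall x y z, op (op x y) z = op x z.
Hypothesis H2 : forall x y z, op x (op y z) = op x x.

Lemma build (a b : T) : op a b <> op a a -> ~ avoids op D_op.
Proof.
move=> nab Hav; apply: Hav.
pose g (n : nat) := match n with 0 => op a a | 1 => b | 2 => op a b | _ => op b b end.
pose f (i : 'I_4) := g (val i).
have hom : forall i j, f (D_op i j) = op (f i) (f j).
  move=> [[|[|[|[|i]]]] Hi] [[|[|[|[|j]]]] Hj] //;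
  rewrite /f /D_op /= inordK //= ?H1 ?H2 ?H1 ?H2 ?H1 ?H2 //.
have n01 : op a a <> b by move=> E; apply: nab; rewrite -E H2.
have n03 : op a a <> op b b.
  by move=> E; apply: nab; rewrite -(H1 a a b) E H1 -E.
have n12 : b <> op a b.
  move=> E; apply: nab.
  have E2 : op b b = b by rewrite {1}E H1 -E.
  by rewrite -E2 H2.
have n13 : b <> op b b by move=> E; apply: nab; rewrite E H2.
have n23 : op a b <> op b b.
  move=> E; apply: nab.
  have := H1 a b (op a a); rewrite E H1 !H2 => E2.
  exact E2.
have n02 : op a a <> op a b by move=> E; apply: nab.
exists (fun x => exists i, f i = x); split.
  split; first by exists (f ord0); exists ord0.
  by move=> x y [i <-] [j <-]; exists (D_op i j); rewrite hom.
exists f; split.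
- by move=> i; exists i.
- move=> i j; rewrite /f.
  case: i => [[|[|[|[|i]]]] Hi]; case: j => [[|[|[|[|j]]]] Hj] //= E;
  try (by apply: val_inj); exfalso; auto.
- by move=> x [i <-]; exists i.
- exact: hom.
Qed.
End Aux.

Theorem mainTheorem14 (T : Type) (op : T -> T -> T) (t0 : T)
  (H1 : forall x y z, op (op x y) z = op x z)
  (H2 : forall x y z, op x (op y z) = op x x) :
  ((forall x y z, op x y = op x z) /\ (forall x y z, op (op x y) z = op x y))
  <-> avoids op D_op.
Proof.
split.
- move=> [E _] [S [_ [f [_ inj _ hom]]]].
  have h00 := hom ord0 ord0.
  have h01 := hom ord0 (inord 1).
  rewrite (E (f ord0) (f (inord 1)) (f ord0)) -h00 in h01.
  have := inj _ _ h01.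
  by rewrite /D_op /= inordK //= => /(congr1 val); rewrite /= !inordK.
- move=> Hav.
  have key : forall x y, op x y = op x x.
    move=> x y; apply: NNPP => ne; exact: (@build T op H1 H2 x y ne Hav).
  split.
  + by move=> x y z; rewrite key (key x z).
  + by move=> x y z; rewrite H1 key (key x y).
Qed.
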